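(* Let $T_1,T_2$ be tables joined on column $J$, where $T_1$ has a real-valued column $W$. Let $0<p_1,q_1,p_2,q_2\le1$, $S_1=\mathrm{UBS}_{p_1,q_1}(T_1,J)$, $S_2=\mathrm{UBS}_{p_2,q_2}(T_2,J)$, $p_{\min}=\min\{p_1,p_2\}$, and let $F=\sum_{(t_1,t_2)\in S_1\bowtie_J S_2} t_1.W$. Then the estimator $\hat J_{\mathrm{sum}}=\frac{1}{p_{\min}q_1q_2}F$ satisfies $\mathrm{E}[\hat J_{\mathrm{sum}}]=E_{\mathrm{sum}}$, where $E_{\mathrm{sum}}=\sum_{(t_1,t_2)\in T_1\bowtie_J T_2} t_1.W$.
   Context: $T_1,T_2$ are finite multisets of tuples with a join attribute $J$ taking values in a finite set $\mathcal U$. $X\bowtie_J Y$ is the set of pairs $(t_1,t_2)\in X\times Y$ with $t_1.J=t_2.J$. $\mathrm{UBS}_{p,q}(T,J)$: given a hash function $h:\mathcal U\to[0,1]$, each tuple $t\in T$ with $h(t.J)<p$ is included independently with probability $q$; others are excluded. The values $h(v)$ are independent uniform on $[0,1]$, the same $h$ is used for both tables, and the Bernoulli coins are independent across all tuples and independent of $h$. *)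

(* Defs.v *)
From mathcomp Require Import all_boot all_order all_algebra.
From mathcomp Require Import all_classical all_reals all_analysis.
Set Implicit Arguments. Unset Strict Implicit. Unset Printing Implicit Defensive.
Import Order.TTheory GRing.Theory Num.Theory.
Local Open Scope ring_scope.
Local Open Scope classical_set_scope.

(* Tables are finite multisets of tuples: a table is a finite index type I
   (one index per tuple occurrence) together with the join attribute
   J : I -> U of each tuple; T1 also carries a real column W : I1 -> R. *)

Definition upd (R : realType) (U : eqType) (h : U -> R) (v : U) (x : R) : U -> R :=
  fun u => if u == v then x else h u.

(* Expectation over independent uniform [0,1] hash values h(v), v ranging
   over the list s: iterated Lebesgue integral over [0,1] for each v. *)
Fixpoint Eunif (R : realType) (U : eqType) (s : seq U)
  (G : (U -> R) -> R) (h : U -> R) : R :=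
  match s with
  | [::] => G h
  | v :: s' => Rintegral (@lebesgue_measure R) `[0%R, 1%R]
                 (fun x : R => Eunif s' G (upd h v x))
  end.

(* Expectation of G over the hash h : U -> [0,1] with independent uniform
   coordinates (U finite). The initial values are all overwritten. *)
Definition Ehash (R : realType) (U : finType) (G : (U -> R) -> R) : R :=
  Eunif (enum U) G (fun _ => 0).

Definition Ecoin (R : realType) (I : finType) (q : R)
  (G : {ffun I -> bool} -> R) : R :=
  \sum_(c : {ffun I -> bool}) (\prod_(i : I) (if c i then q else 1 - q)) * G c.

Definition ubs_in (R : realType) (U : finType) (I : finType) (J : I -> U)
  (p : R) (h : U -> R) (c : {ffun I -> bool}) (i : I) : bool :=
  (h (J i) < p) && c i.

Definition F_join (R : realType) (U I1 I2 : finType) (J1 : I1 -> U) (J2 : I2 -> U)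
  (W : I1 -> R) (S1 : pred I1) (S2 : pred I2) : R :=
  \sum_(i1 : I1 | S1 i1) \sum_(i2 : I2 | S2 i2 && (J1 i1 == J2 i2)) W i1.

Definition E_sum (R : realType) (U I1 I2 : finType) (J1 : I1 -> U) (J2 : I2 -> U)
  (W : I1 -> R) : R := F_join J1 J2 W predT predT.

Definition E_Jsum (R : realType) (U I1 I2 : finType) (J1 : I1 -> U) (J2 : I2 -> U)
  (W : I1 -> R) (p1 q1 p2 q2 : R) : R :=
  Ehash (fun h : U -> R =>
    Ecoin q1 (fun c1 : {ffun I1 -> bool} =>
      Ecoin q2 (fun c2 : {ffun I2 -> bool} =>
        F_join J1 J2 W (ubs_in J1 p1 h c1) (ubs_in J2 p2 h c2)
          / (Num.min p1 p2 * q1 * q2)))).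

(* Main.v *)
Require Import Defs.
From mathcomp Require Import all_boot all_order all_algebra.
From mathcomp Require Import all_classical all_reals all_analysis.
From mathcomp Require Import ring.
Import Order.TTheory GRing.Theory Num.Theory.
Local Open Scope ring_scope.
Local Open Scope classical_set_scope.

Lemma int_step (R : realType) (C a m : R) : 0 < m -> m <= 1 ->
  Rintegral (@lebesgue_measure R) `[0%R, 1%R] (fun x : R => (C + a * ((x < m)%R)%:R)%R)
  = C + a * m.
Proof.
move=> m0 m1.
have mD : measurable (`[0%R, 1%R] : set R) by [].
set A := [set` Interval (BSide true (0:R)) (BSide true m)].
have fin1 : (lebesgue_measure (`[0%R, 1%R] : set R) < +oo)%E.
  by rewrite lebesgue_measure_itv/= lte_fin ltr01 oppr0 adde0 ltry.
have iA : (@lebesgue_measure R).-integrable `[0%R, 1%R] (EFin \o \1_A).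
  apply: integrableS (integrable_indic_itv _ _ _ _) => //.
have iC : (@lebesgue_measure R).-integrable `[0%R, 1%R] (EFin \o (fun _ : R => C)).
  apply: measurable_bounded_integrable => //; exact: bounded_cst.
transitivity (Rintegral (@lebesgue_measure R) `[0%R, 1%R] (fun x => C + a * \1_A x)).
  apply: eq_Rintegral.
  move=> x; rewrite inE /= in_itv /= => /andP[x0 x1].
  rewrite /A indicE; have [xm|xm] := ltP x m.
    by rewrite mem_set //= in_itv /= x0 xm.
  by rewrite memNset //= in_itv /= x0 ltNge xm andbF.
rewrite RintegralD //; last first.
  have H := integrableZl _ a iA.
  rewrite (_ : EFin \o _ = fun x => (a%:E * (EFin \o \1_A) x)%E).
    exact: H.
  by apply/funext => y /=; rewrite EFinM.
rewrite Rintegral_cst // RintegralZl //.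
have L1 : lebesgue_measure (`[0%R, 1%R] : set R) = 1%:E.
  by rewrite lebesgue_measure_itv /= lte_fin ltr01 oppr0 adde0.
have AI : A `&` `[0%R, 1%R] = A.
  apply/seteqP; split => x /=; first by case.
  rewrite /A /= => H. move: H; rewrite !in_itv /= => /andP[x0 xm]; split => //.
    by rewrite x0 xm.
  by rewrite x0 (le_trans (ltW xm)).
have LA : lebesgue_measure A = m%:E.
  by rewrite /A lebesgue_measure_itv /= lte_fin m0 /= oppr0 adde0.
have I1 : (\int[lebesgue_measure]_(x in `[0%R, 1%R]) (\1_A x)%:E = m%:E)%E.
  have LAI : lebesgue_measure (A `&` `[0%R, 1%R]) = m%:E by rewrite AI.
  by rewrite integral_indic //; exact: measurable_itv.
rewrite (_ : fine _ = 1); last by rewrite [LHS]/= L1.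
rewrite mulr1 /Rintegral I1 /=.
done.
Qed.

Lemma Eunif_lin (R : realType) (U : finType) (m : R) (a : U -> R)
  (G : (U -> R) -> R) : 0 < m -> m <= 1 ->
  (forall h, G h = \sum_v a v * ((h v < m)%R)%:R) ->
  forall s : seq U, uniq s -> forall h0,
  Eunif s G h0 = \sum_(v | v \in s) a v * m
                 + \sum_(v | v \notin s) a v * ((h0 v < m)%R)%:R.
Proof.
move=> m0 m1 HG; elim=> [|v s IH] /=.
  move=> _ h0; rewrite HG big_pred0 ?add0r //.
move=> /andP[vs us] h0.
set C := \sum_(w | w \in s) a w * m
  + \sum_(w | (w \notin s) && (w != v)) a w * ((h0 w < m)%R)%:R.
transitivity (Rintegral (@lebesgue_measure R) `[0%R, 1%R]
   (fun x : R => (C + a v * ((x < m)%R)%:R)%R)).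
  apply: eq_Rintegral => x _; rewrite IH // /C -addrA; congr (_ + _).
  rewrite (bigD1 v) //= /upd eqxx addrC; congr (_ + _).
  by apply: eq_bigr => w /andP[_ /negbTE ->].
rewrite int_step // /C -addrA [X in _ + X]addrC addrA; congr (_ + _).
  rewrite [RHS](bigD1 v) ?mem_head //= addrC; congr (_ + _).
  apply: eq_bigl => w; rewrite in_cons.
  case: eqP => [->|] //=; last by rewrite andbT.
  exact: negbTE.
apply: eq_bigl => w; rewrite in_cons negb_or andbC.
done.
Qed.

Lemma sum_ind (R : realType) (I : finType) (P : pred I) (F : I -> R) :
  \sum_(i | P i) F i = \sum_i (P i)%:R * F i.
Proof.
rewrite big_mkcond; apply: eq_bigr => i _.
by case: (P i); rewrite ?mul1r ?mul0r.
Qed.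

Lemma Ecoin_ext (R : realType) (I : finType) (q : R) (F G : {ffun I -> bool} -> R) :
  (forall c, F c = G c) -> Ecoin q F = Ecoin q G.
Proof. by move=> FG; rewrite /Ecoin; apply: eq_bigr => c _; rewrite FG. Qed.

Lemma Ecoin_sum (R : realType) (I K : finType) (q : R) (F : K -> {ffun I -> bool} -> R) :
  Ecoin q (fun c => \sum_k F k c) = \sum_k Ecoin q (F k).
Proof.
rewrite /Ecoin; under eq_bigr do rewrite mulr_sumr.
exact: exchange_big.
Qed.

Lemma Ecoin_ind (R : realType) (I : finType) (q : R) (i : I) (b : R) :
  Ecoin q (fun c => (c i)%:R * b) = q * b.
Proof.
rewrite /Ecoin.
pose w (j : I) (x : bool) : R :=
  if j == i then x%:R * (if x then q else 1 - q) else (if x then q else 1 - q).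
transitivity ((\sum_(c : {ffun I -> bool}) \prod_j w j (c j)) * b).
  rewrite mulr_suml; apply: eq_bigr => c _; rewrite mulrA; congr (_ * _).
  rewrite (bigD1 i) //= [RHS](bigD1 i) //= /w eqxx.
  rewrite [X in _ = _ * X](eq_bigr (fun j => if c j then q else 1 - q)); last first.
    by move=> j /negbTE ->.
  by rewrite mulrC mulrA.
rewrite -bigA_distr_bigA (bigD1 i) //=.
have -> : \prod_(j | j != i) \sum_(x : bool) w j x = 1.
  apply: big1 => j /negbTE ji; rewrite /w ji big_bool /=.
  by rewrite addrC subrK.
by rewrite /w eqxx big_bool /= mul1r mul0r addr0 mulr1.
Qed.

Lemma join_exch (R : realType) (U I1 I2 : finType) (J1 : I1 -> U) (J2 : I2 -> U)
  (Y : I1 -> R) (g : U -> R) :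
  \sum_v (\sum_i1 \sum_i2 ((J1 i1 == v) && (J2 i2 == v))%:R * Y i1) * g v
  = \sum_i1 \sum_i2 (J1 i1 == J2 i2)%:R * Y i1 * g (J1 i1).
Proof.
transitivity (\sum_v \sum_i1 \sum_i2
    ((J1 i1 == v) && (J2 i2 == v))%:R * Y i1 * g v).
  apply: eq_bigr => v _; rewrite mulr_suml; apply: eq_bigr => i1 _.
  by rewrite mulr_suml.
rewrite exchange_big; apply: eq_bigr => i1 _.
rewrite exchange_big; apply: eq_bigr => i2 _.
rewrite (bigD1 (J1 i1)) //= big1 ?addr0; last first.
  by move=> v /negbTE; rewrite eq_sym => ->; rewrite /= !mul0r.
by rewrite eqxx /= eq_sym.
Qed.

Theorem lemma4 (R : realType) (U I1 I2 : finType)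
  (J1 : I1 -> U) (J2 : I2 -> U) (W : I1 -> R) (p1 q1 p2 q2 : R) :
  0 < p1 -> p1 <= 1 -> 0 < q1 -> q1 <= 1 ->
  0 < p2 -> p2 <= 1 -> 0 < q2 -> q2 <= 1 ->
  E_Jsum J1 J2 W p1 q1 p2 q2 = E_sum J1 J2 W.
Proof.
move=> p10 p11 q10 q11 p20 p21 q20 q21.
set m := Num.min p1 p2.
have m0 : 0 < m by rewrite lt_min p10 p20.
have m1 : m <= 1 by rewrite ge_min p11.
have mn0 : m != 0 by rewrite gt_eqF.
have q1n0 : q1 != 0 by rewrite gt_eqF.
have q2n0 : q2 != 0 by rewrite gt_eqF.
pose a (v : U) := \sum_i1 \sum_i2 ((J1 i1 == v) && (J2 i2 == v))%:R * (W i1 / m).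
rewrite /E_Jsum /Ehash (@Eunif_lin _ _ m a _ m0 m1 _ _ (enum_uniq U)).
  rewrite [X in _ + X]big_pred0; last by move=> v; rewrite mem_enum.
  rewrite addr0 (eq_bigl predT); last by move=> v; rewrite mem_enum.
  rewrite /a (@join_exch _ _ _ _ J1 J2 (fun i1 => W i1 / m) (fun _ => m)).
  rewrite /E_sum /F_join sum_ind; apply: eq_bigr => i1 _.
  rewrite sum_ind /= mul1r; apply: eq_bigr => i2 _.
  by rewrite -mulrA divfK.
move=> h.
rewrite /a (@join_exch _ _ _ _ J1 J2 (fun i1 => W i1 / m) (fun v => ((h v < m)%R)%:R)).
pose X i1 i2 := ((h (J1 i1) < p1) && (h (J2 i2) < p2) && (J1 i1 == J2 i2))%:R
   * W i1 / (m * q1 * q2).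
transitivity (Ecoin q1 (fun c1 => \sum_i1 \sum_i2 (c1 i1)%:R * (q2 * X i1 i2))).
  apply: Ecoin_ext => c1.
  transitivity (Ecoin q2 (fun c2 => \sum_i1 \sum_i2 (c2 i2)%:R * ((c1 i1)%:R * X i1 i2))).
    apply: Ecoin_ext => c2.
    rewrite /F_join sum_ind mulr_suml; apply: eq_bigr => i1 _.
    rewrite sum_ind mulr_sumr mulr_suml; apply: eq_bigr => i2 _.
    rewrite /ubs_in /X.
    case: (h (J1 i1) < p1); case: (c1 i1); case: (h (J2 i2) < p2);
      case: (c2 i2); case: (J1 i1 == J2 i2);
      by rewrite /= ?mulr1n ?mulr0n ?mul0r ?mulr0 ?mul1r ?mulr1 ?mul0r.
  rewrite Ecoin_sum; apply: eq_bigr => i1 _.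
  rewrite Ecoin_sum; apply: eq_bigr => i2 _.
  by rewrite Ecoin_ind mulrCA.
rewrite Ecoin_sum; apply: eq_bigr => i1 _.
rewrite Ecoin_sum; apply: eq_bigr => i2 _.
rewrite Ecoin_ind /X.
case: eqP => [E|_]; last by rewrite andbF /= !mulr0n !mul0r !mulr0.
rewrite andbT -E -lt_min /= mulr1n.
case: (h (J1 i1) < m)%R; rewrite /= ?mulr1n ?mulr0n ?mul0r ?mulr0 ?mul1r ?mulr1 //.
by field; rewrite mn0 q1n0 q2n0.
Qed.
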